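(* Let $p$ be an odd prime, $n$ a positive integer, $d=\frac{p^n+1}{2}$ and $F(x)=x^d$ on $\mathrm{GF}(p^n)$. For every $c\in\mathrm{GF}(p^n)$ with $c\neq\pm1$, ${}_c\Delta_F\le 4$. Moreover, if $p^n\equiv1\pmod 4$ and $c\neq\pm1$ satisfies $\chi\big(\frac{1-c}{1+c}\big)=1$, then ${}_c\Delta_F\le 2$.
   Context: For a function $F:\mathrm{GF}(p^n)\to\mathrm{GF}(p^n)$ and $a,b,c\in\mathrm{GF}(p^n)$, let ${}_c\Delta_F(a,b)=\#\{x\in\mathrm{GF}(p^n): F(x+a)-cF(x)=b\}$. The $c$-differential uniformity of $F$ is ${}_c\Delta_F=\max\{{}_c\Delta_F(a,b): a,b\in\mathrm{GF}(p^n),\ \text{and } a\neq 0 \text{ if } c=1\}$. $\chi$ denotes the quadratic multiplicative character of $\mathrm{GF}(p^n)^*$ ($\chi(y)=1$ if $y$ is a nonzero square, $-1$ otherwise). *)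

(* Defs.v *)
From HB Require Import structures.
From mathcomp Require Import all_boot all_order all_algebra all_field.
Set Implicit Arguments. Unset Strict Implicit. Unset Printing Implicit Defensive.
Import GRing.Theory.
Local Open Scope ring_scope.

Definition cDelta (K : finFieldType) (f : K -> K) (c a b : K) : nat :=
  #|[set x : K | f (x + a) - c * f x == b]|.

Definition cDU (K : finFieldType) (f : K -> K) (c : K) : nat :=
  \max_(ab : K * K | (c != 1) || (ab.1 != 0)) cDelta f c ab.1 ab.2.

Definition chi (K : finFieldType) (y : K) : int :=
  if y == 0 then 0%R
  else if [exists z : K, z ^+ 2 == y] then 1%R else (-1)%R.

(* Main.v *)
Require Import Defs.
From HB Require Import structures.
From mathcomp Require Import all_boot all_order all_algebra all_field.
From mathcomp Require Import ring.
Set Implicit Arguments. Unset Strict Implicit.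
Import GRing.Theory.
Local Open Scope ring_scope.

Section Aux.
Variables (K : finFieldType) (m : nat).
Hypothesis hq : forall y : K, y != 0 -> y ^+ (m * 2) = 1.

Definition e (y : K) := y ^+ m.
Definition s (y : K) : K := if e y == -1 then -1 else 1.

Lemma F_s (y : K) : y ^+ m.+1 = s y * y.
Proof.
rewrite /s /e exprSr; have [->|y0] := eqVneq y 0; first by rewrite !mulr0.
have : (y ^+ m) ^+ 2 == 1 by rewrite -exprM hq.
rewrite sqrf_eq1 => /orP [] /eqP ->; last by rewrite eqxx.
by case: ifP => [/eqP <-|].
Qed.

Lemma s_pm (y : K) : (s y == 1) || (s y == -1).
Proof. by rewrite /s; case: ifP; rewrite eqxx ?orbT. Qed.

Lemma coef_nz (s1 s2 c : K) : (s1 == 1) || (s1 == -1) -> (s2 == 1) || (s2 == -1) ->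
  c != 1 -> c != -1 -> s1 - c * s2 != 0.
Proof.
move=> /orP [] /eqP -> /orP [] /eqP -> c1 c2; apply/eqP => h.
- move/eqP: c1; apply; have -> : c = 1 - (1 - c * 1) by ring. 
  by rewrite h subr0.
- move/eqP: c2; apply; have -> : c = (1 - c * -1) - 1 by ring.
  by rewrite h sub0r.
- move/eqP: c2; apply; have -> : c = - (-1 - c * 1) - 1 by ring.
  by rewrite h oppr0 sub0r.
- move/eqP: c1; apply; have -> : c = (-1 - c * -1) + 1 by ring.
  by rewrite h add0r.
Qed.

Lemma lin (c a b x : K) :
  (x + a) ^+ m.+1 - c * x ^+ m.+1 = b ->
  (s (x + a) - c * s x) * x = b - s (x + a) * a.
Proof. move=> H; rewrite -H !F_s. ring. Qed.

Lemma key (c a b x y : K) : c != 1 -> c != -1 ->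
  (x + a) ^+ m.+1 - c * x ^+ m.+1 = b ->
  (y + a) ^+ m.+1 - c * y ^+ m.+1 = b ->
  s (x + a) = s (y + a) -> s x = s y -> x = y.
Proof.
move=> c1 c2 /lin Hx /lin Hy E1 E2.
have hk : s (x + a) - c * s x != 0 by apply: coef_nz; rewrite ?s_pm.
apply: (mulfI hk).
by rewrite Hx E1 E2 -Hy.
Qed.

Lemma aux (c a b x y : K) : c != 1 -> c != -1 ->
  e (1 - c) = e (1 + c) ->
  (x + a) ^+ m.+1 - c * x ^+ m.+1 = b ->
  (y + a) ^+ m.+1 - c * y ^+ m.+1 = b ->
  s (x + a) = s (y + a) -> e x != -1 -> e y == -1 -> False.
Proof.
move=> c1 c2 hr /lin Hx /lin Hy E1 ex ey.
have sx : s x = 1 by rewrite /s (negbTE ex).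
have sy : s y = -1 by rewrite /s ey.
rewrite sx mulr1 in Hx; rewrite sy mulrN1 opprK -E1 in Hy.
have H : (s (x + a) + c) * y = (s (x + a) - c) * x by rewrite Hx Hy.
have c0 : 1 + c != 0 by rewrite addrC addr_eq0.
have m1 : (-1 : K) != 0 by rewrite oppr_eq0 oner_eq0.
have [k [Ek1 Ek2 k0]] : exists k, [/\ e (s (x + a) + c) = k,
   e (s (x + a) - c) = k & k != 0].
  case/orP: (s_pm (x + a)) => /eqP ->.
    by exists (e (1 + c)); rewrite hr; split => //; apply: expf_neq0.
  exists (e (-1) * e (1 + c)); split.
  - by rewrite -hr /e -exprMn; congr (_ ^+ _); ring.
  - by rewrite /e -exprMn; congr (_ ^+ _); ring.
  - by rewrite mulf_neq0 // expf_neq0.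
have : e ((s (x + a) + c) * y) = e ((s (x + a) - c) * x) by rewrite H.
rewrite /e !exprMn -/(e y) -/(e x) -/(e (_ + c)) -/(e (_ - c)) Ek1 Ek2.
move=> /(mulfI k0) exy.
by move: ex; rewrite -exy ey.
Qed.

End Aux.

Theorem theorem6 (p n : nat) (K : finFieldType)
  (hp : prime p) (hodd : odd p) (hn : (0 < n)%N)
  (hchar : p \in [pchar K]) (hcard : #|K| = (p ^ n)%N) :
  let d := ((p ^ n).+1 %/ 2)%N in
  let F := fun x : K => x ^+ d in
  (forall c : K, c != 1 -> c != -1 -> (cDU F c <= 4)%N) /\
  ((p ^ n %% 4 = 1)%N ->
    forall c : K, c != 1 -> c != -1 ->
      chi ((1 - c) / (1 + c)) = 1 -> (cDU F c <= 2)%N).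
Proof.
move=> d F.
set q := (p ^ n)%N.
have oq : odd q by rewrite /q oddX hodd orbT.
set m := q./2.
have qm : q = (m * 2).+1 by rewrite -(odd_double_half q) oq muln2.
have dm : d = m.+1 by rewrite /d -/q qm; rewrite -[(m * 2).+2]/(m.+1 * 2)%N mulnK.
have hq : forall y : K, y != 0 -> y ^+ (m * 2) = 1.
  move=> y y0; apply: (mulfI y0); rewrite mulr1 -exprS -qm.
  by rewrite -[X in _ = X](expf_card y) hcard.
have FE : F = fun x => x ^+ m.+1 by rewrite /F dm.
split.
  move=> c c1 c2; apply/bigmax_leqP => [[a b]] _ /=.
  rewrite /cDelta FE.
  set S := [set x | _].
  pose f := fun x : K => (e m (x + a) == -1, e m x == -1).
  have inj : {in S &, injective f}.
    move=> x y; rewrite !inE /= => /eqP Hx /eqP Hy [E1 E2].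
    by apply: (key hq c1 c2 Hx Hy); rewrite /s ?E1 ?E2.
  rewrite -(card_in_imset inj); apply: leq_trans (max_card _) _.
  by rewrite card_prod card_bool.
move=> _ c c1 c2 hchi.
have hr : e m (1 - c) = e m (1 + c).
  have c0 : 1 + c != 0 by rewrite addrC addr_eq0.
  move: hchi; rewrite /chi; case: ifP => [_ /eqP //|r0].
  case: ifP => [/existsP [z /eqP hz] _|]; last by move=> _ /eqP.
  have z0 : z != 0.
    by apply/negP => /eqP z0; move: r0; rewrite -hz z0 expr0n eqxx.
  rewrite -{1}(divfK c0 (1 - c)) /e exprMn -hz -exprM mulnC hq // mul1r.
  by [].
apply/bigmax_leqP => [[a b]] _ /=.
rewrite /cDelta FE.
set S := [set x | _].
pose f := fun x : K => e m (x + a) == -1.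
have inj : {in S &, injective f}.
  move=> x y; rewrite !inE /= => /eqP Hx /eqP Hy E1.
  have E1' : s m (x + a) = s m (y + a) by move: E1; rewrite /s /f => ->.
  case ex: (e m x == -1); case ey: (e m y == -1).
  - by apply: (key hq c1 c2 Hx Hy E1'); rewrite /s ex ey.
  - by case: (aux hq c1 c2 hr Hy Hx (esym E1')); rewrite ?ey ?ex.
  - by case: (aux hq c1 c2 hr Hx Hy E1'); rewrite ?ex ?ey.
  - by apply: (key hq c1 c2 Hx Hy E1'); rewrite /s ex ey.
rewrite -(card_in_imset inj); apply: leq_trans (max_card _) _.
by rewrite card_bool.
Qed.
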